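(* Let $a,c,p\in\mathbb{C}$ with $-c\notin\mathbb{N}\cup\{0\}$. Define sequences $(u_n)_{n\ge0}$ and $(v_n)_{n\ge0}$ by $u_0=1$, $u_1=\frac{a}{c}+p$, $v_0=1$, $v_1=\frac{a}{c}-p$ and, for all integers $n\ge1$, \[ u_{n+1}=\frac{a+p(c+2n)+n}{(n+1)(c+n)}u_n-\frac{p(p+1)}{(n+1)(c+n)}u_{n-1}, \] \[ v_{n+1}=\frac{a-p(c+2n)+n}{(n+1)(c+n)}v_n-\frac{(p-1)p}{(n+1)(c+n)}v_{n-1}. \] Then \[ \cosh(pz)\,M(a,c;z)=\sum_{n=0}^\infty\frac{u_n+v_n}{2}z^n,\qquad z\in\mathbb{C}. \]
   Context: For $a\in\mathbb{C}$, $(a)_n=a(a+1)\cdots(a+n-1)$ denotes the Pochhammer symbol, with $(a)_0=1$. For $a,c\in\mathbb{C}$ with $-c\notin\mathbb{N}\cup\{0\}$, the confluent hypergeometric (Kummer) function is $M(a,c;z)=\sum_{n=0}^\infty \frac{(a)_n}{(c)_n\,n!}z^n$, $z\in\mathbb{C}$. *)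

(* Defs.v *)
From Stdlib Require Import Reals Arith Factorial.
From Coquelicot Require Import Coquelicot.

Open Scope C_scope.

Fixpoint poch (a : C) (n : nat) : C :=
  match n with
  | O => 1
  | S m => poch a m * (a + RtoC (INR m))
  end.

Definition kummer_term (a c z : C) (n : nat) : C :=
  poch a n / (poch c n * RtoC (INR (fact n))) * z ^ n.

Definition kummerM (a c z : C) : C :=
  (Series (fun n => Re (kummer_term a c z n)),
   Series (fun n => Im (kummer_term a c z n))).

Definition cexp (w : C) : C :=
  (exp (Re w) * cos (Im w), exp (Re w) * sin (Im w))%R.

Definition ccosh (w : C) : C := (cexp w + cexp (- w)) / 2.

(* Main.v *)
Require Import Defs.
From Stdlib Require Import Reals Lra Lia Factorial.
From Coquelicot Require Import Coquelicot.
Open Scope C_scope.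

Fixpoint csum (f : nat -> C) (n : nat) : C :=
  match n with O => f O | S m => csum f m + f (S m) end.

Lemma csum_ext_loc (f g : nat -> C) n :
  (forall k, (k <= n)%nat -> f k = g k) -> csum f n = csum g n.
Proof.
  induction n as [|n IH]; intros H; simpl.
  - apply H; lia.
  - rewrite IH by (intros; apply H; lia). rewrite (H (S n)) by lia. reflexivity.
Qed.

Lemma csum_lin (f1 f2 f3 f4 : nat -> C) c1 c2 n :
  (forall k, f1 k + c1 * f2 k = f3 k + c2 * f4 k) ->
  csum f1 n + c1 * csum f2 n = csum f3 n + c2 * csum f4 n.
Proof.
  intros H; induction n as [|n IH]; simpl.
  - apply H.
  - replace (csum f1 n + f1 (S n) + c1 * (csum f2 n + f2 (S n))) with
      ((csum f1 n + c1 * csum f2 n) + (f1 (S n) + c1 * f2 (S n))) by ring.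
    rewrite IH, H. ring.
Qed.

Lemma csum_scal (f : nat -> C) c n : c * csum f n = csum (fun k => c * f k) n.
Proof.
  induction n as [|n IH]; simpl; [reflexivity|]. rewrite <- IH. ring.
Qed.

Lemma csum_plus (f g : nat -> C) n : csum f n + csum g n = csum (fun k => f k + g k) n.
Proof.
  induction n as [|n IH]; simpl; [reflexivity|]. rewrite <- IH. ring.
Qed.

Lemma csum_Sr (f : nat -> C) n : csum f (S n) = csum f n + f (S n).
Proof. reflexivity. Qed.

Lemma csum_Sl (f : nat -> C) n : csum f (S n) = f O + csum (fun k => f (S k)) n.
Proof.
  induction n as [|n IH]; simpl; [reflexivity|]. simpl in IH. rewrite IH. ring.
Qed.

Definition conv (A B : nat -> C) (n : nat) : C := csum (fun k => A k * B (n - k)%nat) n.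
Definition Kop (A : nat -> C) (k : nat) : C := RtoC (INR k) * A k.
Definition Dop (A : nat -> C) (k : nat) : C := RtoC (INR (S k)) * A (S k).

Lemma conv_K A B n : RtoC (INR n) * conv A B n = conv (Kop A) B n + conv A (Kop B) n.
Proof.
  unfold conv. rewrite csum_scal, csum_plus. apply csum_ext_loc. intros k Hk.
  unfold Kop. rewrite minus_INR by exact Hk. rewrite RtoC_minus. ring.
Qed.

Lemma conv_S A B n : conv (Kop A) B (S n) = conv (Dop A) B n.
Proof.
  unfold conv. rewrite csum_Sl. unfold Kop at 1. simpl INR.
  replace (RtoC 0 * A O * B (S n - 0)%nat) with (RtoC 0) by ring.
  rewrite Cplus_0_l. apply csum_ext_loc. intros k Hk. reflexivity.
Qed.

Lemma conv_S' A B n : conv A (Kop B) (S n) = conv A (Dop B) n.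
Proof.
  unfold conv. rewrite csum_Sr. rewrite Nat.sub_diag. unfold Kop at 2. simpl INR.
  replace (A (S n) * (RtoC 0 * B O)) with (RtoC 0) by ring. rewrite Cplus_0_r.
  apply csum_ext_loc. intros k Hk. unfold Kop, Dop.
  assert (E : (S n - k)%nat = S (n - k)) by lia. rewrite E. reflexivity.
Qed.

Lemma conv_lin A B1 B2 B3 B4 c1 c2 n :
  (forall k, B1 k + c1 * B2 k = B3 k + c2 * B4 k) ->
  conv A B1 n + c1 * conv A B2 n = conv A B3 n + c2 * conv A B4 n.
Proof.
  intros H. unfold conv. apply csum_lin. intros k.
  replace (A k * B1 (n - k)%nat + c1 * (A k * B2 (n - k)%nat)) with
    (A k * (B1 (n - k)%nat + c1 * B2 (n - k)%nat)) by ring.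
  rewrite H. ring.
Qed.

Lemma conv_ext_l A A' B n : (forall k, A k = A' k) -> conv A B n = conv A' B n.
Proof. intros H; unfold conv; apply csum_ext_loc; intros; rewrite H; reflexivity. Qed.

Lemma conv_scal_l A B c n : conv (fun k => c * A k) B n = c * conv A B n.
Proof. unfold conv. rewrite csum_scal. apply csum_ext_loc; intros; ring. Qed.

Lemma RtoC_S n : RtoC (INR (S n)) = RtoC (INR n) + 1.
Proof. rewrite S_INR, RtoC_plus. reflexivity. Qed.

Lemma lin_trick (x y u v : C) : x - y = u - v -> u = v -> x = y.
Proof.
  intros H1 H2. replace x with ((x - y) + y) by ring. rewrite H1, H2. ring.
Qed.

Lemma conv_rec (e m : nat -> C) (a c p : C)
  (He : forall k, Dop e k = p * e k)
  (Hm : forall k, RtoC (INR (S k)) * (RtoC (INR k) + c) * m (S k) = (RtoC (INR k) + a) * m k)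
  (n' : nat) :
  let n := S n' in
  RtoC (INR (S n)) * (c + RtoC (INR n)) * conv e m (S n) =
  (a + p * (c + 2 * RtoC (INR n)) + RtoC (INR n)) * conv e m n
  - p * (p + 1) * conv e m n'.
Proof.
  intros n.
  set (W := conv e m). set (G := conv e (Dop m)).
  assert (E1 : forall j, RtoC (INR (S j)) * W (S j) = p * W j + G j).
  { intros j. unfold W. rewrite conv_K, conv_S, conv_S'.
    rewrite (conv_ext_l (Dop e) (fun k => p * e k)) by exact He.
    rewrite conv_scal_l. reflexivity. }
  assert (E3 : RtoC (INR n) * G n = p * G n' + conv e (Kop (Dop m)) n).
  { unfold G. rewrite conv_K. unfold n. rewrite conv_S.
    rewrite (conv_ext_l (Dop e) (fun k => p * e k)) by exact He.
    rewrite conv_scal_l. reflexivity. }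
  assert (E5 : conv e (Kop (Dop m)) n + c * G n = conv e (Kop m) n + a * W n).
  { unfold G, W. apply conv_lin. intros k. unfold Kop, Dop.
    transitivity ((RtoC (INR k) + a) * m k); [rewrite <- Hm; ring | ring]. }
  assert (E6 : RtoC (INR n) * W n = p * W n' + conv e (Kop m) n).
  { unfold W. rewrite conv_K. unfold n. rewrite conv_S.
    rewrite (conv_ext_l (Dop e) (fun k => p * e k)) by exact He.
    rewrite conv_scal_l. reflexivity. }
  assert (HGn : G n = RtoC (INR (S n)) * W (S n) - p * W n) by (rewrite E1; ring).
  assert (HGn' : G n' = RtoC (INR n) * W n - p * W n') by (unfold n; rewrite E1; ring).
  assert (HX1 : conv e (Kop (Dop m)) n = RtoC (INR n) * G n - p * G n') by (rewrite E3; ring).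
  assert (HX2 : conv e (Kop m) n = RtoC (INR n) * W n - p * W n') by (rewrite E6; ring).
  rewrite HX1, HX2, HGn' in E5. rewrite HGn in E5.
  rewrite RtoC_S in *.
  refine (lin_trick _ _ _ _ _ E5).
  unfold n in *. rewrite !RtoC_S in *. ring.
Qed.

Definition ecoef (p : C) (k : nat) : C := p ^ k / RtoC (INR (fact k)).
Definition mcoef (a c : C) (k : nat) : C := poch a k / (poch c k * RtoC (INR (fact k))).

Lemma RtoC_nz (r : R) : r <> 0%R -> RtoC r <> 0.
Proof. intros H E. apply H. apply (f_equal fst) in E. exact E. Qed.

Lemma fact_nz k : RtoC (INR (fact k)) <> 0.
Proof. apply RtoC_nz, INR_fact_neq_0. Qed.

Lemma Sn_nz k : RtoC (INR k) + 1 <> 0.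
Proof. rewrite <- RtoC_S. apply RtoC_nz, not_0_INR. lia. Qed.

Lemma cn_nz c k : (forall n : nat, c <> - RtoC (INR n)) -> c + RtoC (INR k) <> 0.
Proof. intros hc E. apply (hc k). replace c with (c + RtoC (INR k) - RtoC (INR k)) by ring.
  rewrite E. ring. Qed.

Lemma Cmult_integral' (x y : C) : x * y = 0 -> x = 0 \/ y = 0.
Proof.
  intros H. destruct (Ceq_dec x 0) as [E|E]; [left; exact E|right].
  replace y with (/ x * (x * y)) by (field; exact E). rewrite H. ring.
Qed.

Lemma div_trick (d x y : C) : d <> 0 -> d * x = y -> x = y / d.
Proof. intros Hd H. rewrite <- H. field. exact Hd. Qed.

Lemma poch_nz c k : (forall n : nat, c <> - RtoC (INR n)) -> poch c k <> 0.
Proof.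
  intros hc. induction k as [|k IH]; simpl.
  - apply RtoC_nz. lra.
  - intros E. apply Cmult_integral' in E. destruct E as [E|E]; [exact (IH E)|].
    exact (cn_nz c k hc E).
Qed.

Lemma e_D p k : Dop (ecoef p) k = p * ecoef p k.
Proof.
  unfold Dop, ecoef. rewrite fact_simpl, mult_INR, RtoC_mult.
  pose proof (fact_nz k). assert (RtoC (INR (S k)) <> 0) by (apply RtoC_nz, not_0_INR; lia).
  rewrite Cpow_S. field. split; assumption.
Qed.

Lemma m_ode a c (hc : forall n : nat, c <> - RtoC (INR n)) k :
  RtoC (INR (S k)) * (RtoC (INR k) + c) * mcoef a c (S k) = (RtoC (INR k) + a) * mcoef a c k.
Proof.
  unfold mcoef. simpl poch. rewrite fact_simpl, mult_INR, RtoC_mult.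
  pose proof (fact_nz k). assert (RtoC (INR (S k)) <> 0) by (apply RtoC_nz, not_0_INR; lia).
  pose proof (poch_nz c k hc). pose proof (cn_nz c k hc).
  field. repeat split; try assumption.
Qed.

Lemma u_eq (a c p : C) (u : nat -> C)
  (hc : forall n : nat, c <> - RtoC (INR n))
  (hu0 : u 0%nat = 1) (hu1 : u 1%nat = a / c + p)
  (hu : forall n : nat, (1 <= n)%nat ->
     u (S n) = (a + p * (c + 2 * RtoC (INR n)) + RtoC (INR n))
                 / ((RtoC (INR n) + 1) * (c + RtoC (INR n))) * u n
               - p * (p + 1) / ((RtoC (INR n) + 1) * (c + RtoC (INR n)))
                 * u (n - 1)%nat) :
  forall n, u n = conv (ecoef p) (mcoef a c) n.
Proof.
  assert (H : forall n, u n = conv (ecoef p) (mcoef a c) n /\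
                        u (S n) = conv (ecoef p) (mcoef a c) (S n)).
  { induction n as [|n [IH1 IH2]].
    - split.
      + rewrite hu0. unfold conv, ecoef, mcoef; simpl. field.
      + rewrite hu1. unfold conv, ecoef, mcoef; simpl.
        pose proof (cn_nz c 0 hc) as H0. simpl in H0. rewrite Cplus_0_r in H0.
        replace (c + 0) with c by ring. replace (1 * c) with c by ring.
        replace (a + 0) with a by ring.
        field. repeat split; try assumption; apply RtoC_nz; lra.
    - split; [exact IH2|].
      rewrite (hu (S n)) by lia. replace (S n - 1)%nat with n by lia.
      rewrite IH1, IH2.
      pose proof (conv_rec (ecoef p) (mcoef a c) a c p (e_D p) (m_ode a c hc) n) as HR.
      cbv zeta in HR.
      pose proof (Sn_nz (S n)). pose proof (cn_nz c (S n) hc).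
      rewrite !RtoC_S in HR. rewrite !RtoC_S in H, H0 |- *.
      apply div_trick in HR; [| apply Cmult_neq_0; [exact H | exact H0]].
      rewrite HR. field. split; assumption. }
  intros n; apply H.
Qed.

Lemma Re_sum_n (a : nat -> C) n : Re (sum_n a n) = sum_n (fun k => Re (a k)) n.
Proof.
  induction n as [|n IH].
  - rewrite !sum_O. reflexivity.
  - rewrite !sum_Sn. rewrite <- IH. reflexivity.
Qed.

Lemma Im_sum_n (a : nat -> C) n : Im (sum_n a n) = sum_n (fun k => Im (a k)) n.
Proof.
  induction n as [|n IH].
  - rewrite !sum_O. reflexivity.
  - rewrite !sum_Sn. rewrite <- IH. reflexivity.
Qed.

Lemma is_series_C (a : nat -> C) (l : C) :
  is_series (fun n => Re (a n)) (Re l) -> is_series (fun n => Im (a n)) (Im l) ->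
  is_series a l.
Proof.
  intros H1 H2. unfold is_series in *.
  apply filterlim_locally. intros eps.
  pose proof (proj1 (filterlim_locally _ _) H1 eps) as B1.
  pose proof (proj1 (filterlim_locally _ _) H2 eps) as B2.
  generalize (filter_and _ _ B1 B2). apply filter_imp.
  intros n [C1 C2]. split.
  - change (ball (Re l) eps (Re (sum_n a n))). rewrite Re_sum_n. exact C1.
  - change (ball (Im l) eps (Im (sum_n a n))). rewrite Im_sum_n. exact C2.
Qed.

Lemma is_series_Re (a : nat -> C) (l : C) :
  is_series a l -> is_series (fun n => Re (a n)) (Re l).
Proof.
  intros H. unfold is_series in *.
  apply filterlim_locally. intros eps.
  pose proof (proj1 (filterlim_locally _ _) H eps) as B.
  revert B. apply filter_imp. intros n [B1 B2].
  rewrite <- Re_sum_n. exact B1.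
Qed.

Lemma is_series_Im (a : nat -> C) (l : C) :
  is_series a l -> is_series (fun n => Im (a n)) (Im l).
Proof.
  intros H. unfold is_series in *.
  apply filterlim_locally. intros eps.
  pose proof (proj1 (filterlim_locally _ _) H eps) as B.
  revert B. apply filter_imp. intros n [B1 B2].
  rewrite <- Im_sum_n. exact B2.
Qed.

Lemma im_le_Cmod (c : C) : Rabs (Im c) <= Cmod c.
Proof.
  destruct c as [x y]. unfold Cmod; simpl.
  rewrite <- sqrt_Rsqr_abs. apply sqrt_le_1_alt. unfold Rsqr. nra.
Qed.

Lemma ex_series_Rabs_Re (a : nat -> C) :
  ex_series (fun n => Cmod (a n)) -> ex_series (fun n => Rabs (Re (a n))).
Proof.
  intros E. apply (@ex_series_le R_AbsRing R_CompleteNormedModule _ _) with (2 := E). intros n. change (norm (Rabs (Re (a n)))) with (Rabs (Rabs (Re (a n)))).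
  rewrite Rabs_Rabsolu. apply re_le_Cmod.
Qed.

Lemma ex_series_Rabs_Im (a : nat -> C) :
  ex_series (fun n => Cmod (a n)) -> ex_series (fun n => Rabs (Im (a n))).
Proof.
  intros E. apply (@ex_series_le R_AbsRing R_CompleteNormedModule _ _) with (2 := E). intros n. change (norm (Rabs (Im (a n)))) with (Rabs (Rabs (Im (a n)))).
  rewrite Rabs_Rabsolu. apply im_le_Cmod.
Qed.

Lemma Re_csum (f : nat -> C) n : Re (csum f n) = sum_f_R0 (fun k => Re (f k)) n.
Proof. induction n as [|n IH]; simpl; [reflexivity|]. rewrite <- IH. reflexivity. Qed.

Lemma Im_csum (f : nat -> C) n : Im (csum f n) = sum_f_R0 (fun k => Im (f k)) n.
Proof. induction n as [|n IH]; simpl; [reflexivity|]. rewrite <- IH. reflexivity. Qed.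

Lemma is_series_Cmult (a b : nat -> C) (la lb : C) :
  is_series a la -> is_series b lb ->
  ex_series (fun n => Cmod (a n)) -> ex_series (fun n => Cmod (b n)) ->
  is_series (conv a b) (la * lb).
Proof.
  intros Ha Hb Aa Ab.
  pose proof (is_series_Re _ _ Ha) as Har. pose proof (is_series_Im _ _ Ha) as Hai.
  pose proof (is_series_Re _ _ Hb) as Hbr. pose proof (is_series_Im _ _ Hb) as Hbi.
  pose proof (ex_series_Rabs_Re _ Aa). pose proof (ex_series_Rabs_Im _ Aa).
  pose proof (ex_series_Rabs_Re _ Ab). pose proof (ex_series_Rabs_Im _ Ab).
  apply is_series_C.
  - pose proof (is_series_mult _ _ _ _ Har Hbr H H1) as P1.
    pose proof (is_series_mult _ _ _ _ Hai Hbi H0 H2) as P2.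
    pose proof (is_series_minus _ _ _ _ P1 P2) as P.
    replace (Re (la * lb)) with (plus (Re la * Re lb)%R (opp (Im la * Im lb)%R)).
    2:{ reflexivity. }
    revert P. apply is_series_ext. intros n.
    unfold conv. rewrite Re_csum. change (plus ?x (opp ?y)) with (Rminus x y).
    rewrite <- minus_sum. apply sum_eq. intros k _. simpl. unfold Re, Im. ring.
  - pose proof (is_series_mult _ _ _ _ Har Hbi H H2) as P1.
    pose proof (is_series_mult _ _ _ _ Hai Hbr H0 H1) as P2.
    pose proof (is_series_plus _ _ _ _ P1 P2) as P.
    replace (Im (la * lb)) with (plus (Re la * Im lb)%R (Im la * Re lb)%R).
    2:{ reflexivity. }
    revert P. apply is_series_ext. intros n.
    unfold conv. rewrite Im_csum. change (plus ?x ?y) with (Rplus x y).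
    rewrite <- plus_sum. apply sum_eq. intros k _. simpl. unfold Re, Im. ring.
Qed.

Lemma conv_exp (x y : C) n : conv (ecoef x) (ecoef y) n = ecoef (x + y) n.
Proof.
  induction n as [|n IH].
  - unfold conv, ecoef; simpl. field; try (apply RtoC_nz; lra).
  - assert (Hn : RtoC (INR (S n)) <> 0) by (apply RtoC_nz, not_0_INR; lia).
    assert (E : RtoC (INR (S n)) * conv (ecoef x) (ecoef y) (S n) = (x + y) * ecoef (x + y) n).
    { rewrite <- IH. rewrite conv_K, conv_S, conv_S'.
      rewrite (conv_ext_l (Dop (ecoef x)) (fun k => x * ecoef x k)) by apply e_D.
      rewrite conv_scal_l.
      assert (E2 : conv (ecoef x) (Dop (ecoef y)) n = y * conv (ecoef x) (ecoef y) n).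
      { unfold conv. rewrite csum_scal. apply csum_ext_loc. intros k _. rewrite e_D. ring. }
      rewrite E2. ring. }
    pose proof (e_D (x + y) n) as F. unfold Dop in F. rewrite <- F in E.
    apply div_trick in E; [|exact Hn]. rewrite E. field. exact Hn.
Qed.

Lemma ecoef_Cmod w n : Cmod (ecoef w n) = (Cmod w ^ n / INR (fact n))%R.
Proof.
  unfold ecoef. rewrite Cmod_div by apply fact_nz. rewrite Cmod_pow, Cmod_R.
  rewrite Rabs_right; [reflexivity|]. apply Rle_ge, pos_INR.
Qed.

Lemma ex_series_ecoef w : ex_series (fun n => Cmod (ecoef w n)).
Proof.
  exists (exp (Cmod w)). pose proof (is_exp_Reals (Cmod w)) as H.
  apply is_pseries_R in H. revert H. apply is_series_ext. intros n.
  rewrite ecoef_Cmod. unfold Rdiv. apply Rmult_comm.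
Qed.

Lemma is_series_zero : is_series (fun _ : nat => 0%R) 0%R.
Proof.
  unfold is_series. apply filterlim_ext with (f := fun _ => 0%R).
  - intros n. rewrite sum_n_const. rewrite Rmult_0_r. reflexivity.
  - apply filterlim_const.
Qed.

Lemma is_series_exp_R (x : R) : is_series (ecoef (RtoC x)) (RtoC (exp x)).
Proof.
  assert (E : forall n, ecoef (RtoC x) n = RtoC (x ^ n / INR (fact n))).
  { intros n. unfold ecoef. rewrite RtoC_div by apply INR_fact_neq_0. rewrite RtoC_pow. reflexivity. }
  apply is_series_C.
  - pose proof (is_exp_Reals x) as H. apply is_pseries_R in H.
    revert H. apply is_series_ext. intros n. rewrite E. simpl. unfold Rdiv. ring.
  - generalize is_series_zero. apply is_series_ext. intros n. rewrite E. reflexivity.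
Qed.

Lemma div2_eventually : filterlim Nat.div2 eventually eventually.
Proof.
  unfold filterlim, filter_le, filtermap. intros P [N HN]. exists (2 * N)%nat.
  intros n Hn. apply HN. pose proof (Nat.div2_odd n) as E.
  destruct (Nat.odd n); simpl in E; lia.
Qed.

Lemma spread_even (g h : nat -> R) l :
  (forall k, h (2 * k)%nat = g k) -> (forall k, h (S (2 * k)) = 0%R) ->
  is_series g l -> is_series h l.
Proof.
  intros Hg Hh Hs.
  assert (P : forall k, sum_n h (2 * k) = sum_n g k /\ sum_n h (S (2 * k)) = sum_n g k).
  { induction k as [|k [IH1 IH2]].
    - simpl. rewrite sum_Sn, !sum_O. specialize (Hg O). specialize (Hh O). simpl in Hg, Hh.
      rewrite Hg, Hh. split; [reflexivity|]. change (plus (g O) 0%R = g O). unfold plus; simpl. ring.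
    - replace (2 * S k)%nat with (S (S (2 * k))) by lia.
      assert (A : sum_n h (S (S (2 * k))) = sum_n g (S k)).
      { rewrite sum_Sn, IH2, sum_Sn. replace (S (S (2 * k))) with (2 * S k)%nat by lia.
        rewrite Hg. reflexivity. }
      split; [exact A|]. rewrite sum_Sn, A. replace (S (S (2 * k))) with (2 * S k)%nat by lia.
      rewrite Hh. change (plus (sum_n g (S k)) 0%R = sum_n g (S k)). unfold plus; simpl. ring. }
  unfold is_series. apply filterlim_ext with (f := fun n => sum_n g (Nat.div2 n)).
  - intros n. destruct (Nat.Even_or_Odd n) as [[k Hk]|[k Hk]]; subst n.
    + rewrite Nat.div2_double. symmetry; apply P.
    + rewrite Nat.add_1_r, Nat.div2_succ_double. symmetry; apply P.
  - apply filterlim_comp with (G := eventually). apply div2_eventually. exact Hs.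
Qed.

Lemma spread_odd (g h : nat -> R) l :
  (forall k, h (2 * k)%nat = 0%R) -> (forall k, h (S (2 * k)) = g k) ->
  is_series g l -> is_series h l.
Proof.
  intros Hg Hh Hs. apply is_series_decr_1.
  assert (H0 : h O = 0%R) by (apply (Hg O)). rewrite H0.
  change (is_series (fun k => h (S k)) (plus l (opp zero))). rewrite opp_zero, plus_zero_r.
  apply (spread_even g).
  - exact Hh.
  - intros k. replace (S (S (2 * k))) with (2 * S k)%nat by lia. apply Hg.
  - exact Hs.
Qed.

Lemma cos_series y : is_series (fun k => ((-1) ^ k * y ^ (2 * k) / INR (fact (2 * k)))%R) (cos y).
Proof.
  unfold cos. destruct (exist_cos (Rsqr y)) as [l Hl]. unfold cos_in in Hl.
  apply is_series_Reals in Hl. revert Hl. apply is_series_ext. intros k.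
  match goal with |- ?a = ?b => change (@eq R a b) end.
  unfold cos_n. rewrite pow_mult, Rsqr_pow2. unfold Rdiv. ring.
Qed.

Lemma sin_series y : is_series (fun k => ((-1) ^ k * y ^ (S (2 * k)) / INR (fact (S (2 * k))))%R) (sin y).
Proof.
  unfold sin. destruct (exist_sin (Rsqr y)) as [l Hl]. unfold sin_in in Hl.
  apply is_series_Reals in Hl. apply (is_series_scal_l y) in Hl. revert Hl.
  apply is_series_ext. intros k.
  unfold sin_n. replace (2 * k + 1)%nat with (S (2 * k)) by lia.
  match goal with |- ?a = ?b => change (@eq R a b) end.
  change (scal y ?x) with (Rmult y x).
  change (y ^ S (2 * k))%R with (y * y ^ (2 * k))%R. rewrite pow_mult, Rsqr_pow2. unfold Rdiv. ring.
Qed.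

Lemma iy_even y k : ((0%R, y) : C) ^ (2 * k) = RtoC ((-1) ^ k * y ^ (2 * k))%R.
Proof.
  induction k as [|k IH].
  - simpl. apply injective_projections; simpl; ring.
  - replace (2 * S k)%nat with (S (S (2 * k))) by lia. rewrite !Cpow_S, IH.
    change (y ^ S (S (2 * k)))%R with (y * (y * y ^ (2 * k)))%R.
    apply injective_projections; simpl; ring.
Qed.

Lemma iy_odd y k : ((0%R, y) : C) ^ (S (2 * k)) = ((0%R, ((-1) ^ k * y ^ (S (2 * k)))%R) : C).
Proof.
  rewrite Cpow_S, iy_even. change (y ^ S (2 * k))%R with (y * y ^ (2 * k))%R.
  apply injective_projections; simpl; ring.
Qed.

Lemma Re_divR (z : C) (r : R) : r <> 0%R -> Re (z / RtoC r) = (Re z / r)%R.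
Proof.
  intros Hr. unfold Cdiv. rewrite <- RtoC_inv by exact Hr. destruct z as [z1 z2].
  simpl. unfold Rdiv. ring.
Qed.

Lemma Im_divR (z : C) (r : R) : r <> 0%R -> Im (z / RtoC r) = (Im z / r)%R.
Proof.
  intros Hr. unfold Cdiv. rewrite <- RtoC_inv by exact Hr. destruct z as [z1 z2].
  simpl. unfold Rdiv. ring.
Qed.

Lemma is_series_exp_iy (y : R) : is_series (ecoef ((0%R, y) : C)) ((cos y, sin y) : C).
Proof.
  apply is_series_C.
  - refine (spread_even _ _ _ _ _ (cos_series y)).
    + intros k. unfold ecoef. rewrite Re_divR by apply INR_fact_neq_0. rewrite iy_even. reflexivity.
    + intros k. unfold ecoef. rewrite Re_divR by apply INR_fact_neq_0. rewrite iy_odd.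
      simpl. unfold Rdiv. ring.
  - refine (spread_odd _ _ _ _ _ (sin_series y)).
    + intros k. unfold ecoef. rewrite Im_divR by apply INR_fact_neq_0. rewrite iy_even.
      simpl. unfold Rdiv. ring.
    + intros k. unfold ecoef. rewrite Im_divR by apply INR_fact_neq_0. rewrite iy_odd. reflexivity.
Qed.

Lemma is_series_cexp (w : C) : is_series (ecoef w) (cexp w).
Proof.
  destruct w as [x y].
  assert (Hw : ((x, y) : C) = RtoC x + ((0%R, y) : C)) by (apply injective_projections; simpl; ring).
  pose proof (is_series_Cmult _ _ _ _ (is_series_exp_R x) (is_series_exp_iy y)
                (ex_series_ecoef _) (ex_series_ecoef _)) as H.
  replace (cexp (x, y)) with (RtoC (exp x) * ((cos y, sin y) : C)).
  2:{ unfold cexp. apply injective_projections; simpl; ring. }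
  revert H. apply is_series_ext. intros n. rewrite conv_exp, <- Hw. reflexivity.
Qed.

Lemma ex_series_ratio (b : nat -> R) N :
  (forall n, 0 <= b n)%R -> (forall n, (N <= n)%nat -> b (S n) <= / 2 * b n)%R -> ex_series b.
Proof.
  intros Hpos Hr.
  assert (G : forall k, (b (N + k)%nat <= b N * (/ 2) ^ k)%R).
  { induction k as [|k IH].
    - rewrite Nat.add_0_r. simpl. lra.
    - rewrite Nat.add_succ_r. eapply Rle_trans. apply Hr. lia.
      simpl. pose proof (Hpos (N + k)%nat). nra. }
  apply (proj2 (ex_series_incr_n b N)).
  apply (@ex_series_le R_AbsRing R_CompleteNormedModule _ (fun k => b N * (/ 2) ^ k)%R).
  - intros k. change (norm (b (N + k)%nat)) with (Rabs (b (N + k)%nat)).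
    rewrite Rabs_right by (apply Rle_ge, Hpos). apply G.
  - destruct (ex_series_geom (/ 2)) as [l Hl].
    { rewrite Rabs_right; lra. }
    exists (b N * l)%R. apply (is_series_scal_l (b N)) in Hl. exact Hl.
Qed.

Lemma kummer_abs (a c z : C) (hc : forall n : nat, c <> - RtoC (INR n)) :
  ex_series (fun n => Cmod (kummer_term a c z n)).
Proof.
  set (T := (2 * Cmod c + 4 * Cmod z + 4 * Cmod a * Cmod z + 1)%R).
  assert (HN : eventually (fun n => T < INR n)%R).
  { apply is_lim_seq_INR. exists T. tauto. }
  destruct HN as [N HN].
  apply (ex_series_ratio _ N). { intros; apply Cmod_ge_0. }
  intros n Hn. specialize (HN n Hn).
  assert (Ek : kummer_term a c z (S n) = kummer_term a c z n *
            ((RtoC (INR n) + a) * z / (RtoC (INR (S n)) * (RtoC (INR n) + c)))).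
  { unfold kummer_term. fold (mcoef a c (S n)). fold (mcoef a c n).
    pose proof (m_ode a c hc n) as Hm.
    assert (H1 : RtoC (INR (S n)) <> 0) by (apply RtoC_nz, not_0_INR; lia).
    assert (H2 : RtoC (INR n) + c <> 0) by (rewrite Cplus_comm; apply cn_nz; exact hc).
    apply div_trick in Hm; [| apply Cmult_neq_0; assumption].
    rewrite Hm. rewrite Cpow_S. field. split; assumption. }
  assert (H2 : RtoC (INR n) + c <> 0) by (rewrite Cplus_comm; apply cn_nz; exact hc).
  rewrite Ek, Cmod_mult, Cmod_div, !Cmod_mult, Cmod_R.
  2:{ apply Cmult_neq_0; [apply RtoC_nz, not_0_INR; lia | exact H2]. }
  rewrite Rabs_right by (apply Rle_ge, pos_INR).
  set (x := INR n). set (K := Cmod (kummer_term a c z n)).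
  assert (Kp : (0 <= K)%R) by apply Cmod_ge_0.
  assert (A1 : (Cmod (RtoC x + a) <= x + Cmod a)%R).
  { eapply Rle_trans. apply Cmod_triangle. rewrite Cmod_R, Rabs_right. lra.
    apply Rle_ge, pos_INR. }
  assert (A2 : (x - Cmod c <= Cmod (RtoC x + c))%R).
  { assert (E : RtoC x = (RtoC x + c) + - c) by ring.
    pose proof (Cmod_triangle (RtoC x + c) (- c)) as Tr. rewrite <- E, Cmod_opp, Cmod_R in Tr.
    rewrite Rabs_right in Tr by (apply Rle_ge, pos_INR). lra. }
  assert (Sx : INR (S n) = (x + 1)%R) by apply S_INR.
  rewrite Sx.
  pose proof (Cmod_ge_0 a). pose proof (Cmod_ge_0 c). pose proof (Cmod_ge_0 z).
  pose proof (Cmod_ge_0 (RtoC x + a)).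
  assert (Hx : (T < x)%R) by exact HN. unfold T in Hx.
  assert (AZ : (0 <= Cmod a * Cmod z)%R) by (apply Rmult_le_pos; assumption).
  assert (D : (x / 2 <= Cmod (RtoC x + c))%R) by lra.
  assert (Dp : (0 < Cmod (RtoC x + c))%R) by lra.
  assert (Q : (Cmod (RtoC x + a) * Cmod z <= / 2 * ((x + 1) * Cmod (RtoC x + c)))%R).
  { assert (Q1 : ((x + Cmod a) * Cmod z <= / 2 * ((x + 1) * (x / 2)))%R) by nra.
    eapply Rle_trans. apply Rmult_le_compat_r. lra. exact A1.
    eapply Rle_trans. exact Q1. apply Rmult_le_compat_l. lra. apply Rmult_le_compat_l; lra. }
  apply (Rmult_le_reg_r ((x + 1) * Cmod (RtoC x + c))%R). nra.
  unfold Rdiv. field_simplify. 2:{ nra. }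
  pose proof (Rmult_le_compat_l K _ _ Kp Q) as KQ. lra.
Qed.

Lemma kummer_series (a c z : C) (hc : forall n : nat, c <> - RtoC (INR n)) :
  is_series (kummer_term a c z) (kummerM a c z).
Proof.
  pose proof (kummer_abs a c z hc) as H.
  apply is_series_C.
  - apply Series_correct, ex_series_Rabs, ex_series_Rabs_Re, H.
  - apply Series_correct, ex_series_Rabs, ex_series_Rabs_Im, H.
Qed.

Lemma main_series (a c p z : C) (hc : forall n : nat, c <> - RtoC (INR n)) :
  is_series (fun n => conv (ecoef p) (mcoef a c) n * z ^ n) (cexp (p * z) * kummerM a c z).
Proof.
  pose proof (is_series_Cmult _ _ _ _ (is_series_cexp (p * z)) (kummer_series a c z hc)
                (ex_series_ecoef _) (kummer_abs a c z hc)) as H.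
  revert H. apply is_series_ext. intros n.
  unfold conv. rewrite (Cmult_comm (csum _ n)), csum_scal. apply csum_ext_loc. intros k Hk.
  assert (E : z ^ n = z ^ k * z ^ (n - k)) by (rewrite <- Cpow_add_r; f_equal; lia).
  rewrite E. unfold ecoef, kummer_term. fold (mcoef a c (n - k)).
  rewrite Cpow_mult_l. field. apply fact_nz.
Qed.

Theorem theorem2p3 (a c p : C) (u v : nat -> C)
  (hc : forall n : nat, c <> - RtoC (INR n))
  (hu0 : u 0%nat = 1) (hu1 : u 1%nat = a / c + p)
  (hv0 : v 0%nat = 1) (hv1 : v 1%nat = a / c - p)
  (hu : forall n : nat, (1 <= n)%nat ->
     u (S n) = (a + p * (c + 2 * RtoC (INR n)) + RtoC (INR n))
                 / ((RtoC (INR n) + 1) * (c + RtoC (INR n))) * u n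
               - p * (p + 1) / ((RtoC (INR n) + 1) * (c + RtoC (INR n)))
                 * u (n - 1)%nat)
  (hv : forall n : nat, (1 <= n)%nat ->
     v (S n) = (a - p * (c + 2 * RtoC (INR n)) + RtoC (INR n))
                 / ((RtoC (INR n) + 1) * (c + RtoC (INR n))) * v n
               - (p - 1) * p / ((RtoC (INR n) + 1) * (c + RtoC (INR n)))
                 * v (n - 1)%nat) :
  forall z : C,
    is_series (fun n : nat => (u n + v n) / 2 * z ^ n)
              (ccosh (p * z) * kummerM a c z).
Proof.
  intros z.
  pose proof (u_eq a c p u hc hu0 hu1 hu) as Hu.
  assert (Hv : forall n, v n = conv (ecoef (- p)) (mcoef a c) n).
  { apply (u_eq a c (- p) v hc hv0).
    - rewrite hv1. ring.
    - intros n Hn. rewrite (hv n Hn).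
      replace (a - p * (c + 2 * RtoC (INR n)) + RtoC (INR n)) with
        (a + - p * (c + 2 * RtoC (INR n)) + RtoC (INR n)) by ring.
      replace ((p - 1) * p) with (- p * (- p + 1)) by ring. reflexivity. }
  pose proof (main_series a c p z hc) as Su.
  pose proof (main_series a c (- p) z hc) as Sv.
  pose proof (is_series_plus _ _ _ _ Su Sv) as S.
  apply (is_series_scal_l (/ 2)) in S.
  replace (ccosh (p * z) * kummerM a c z) with
    (scal (/ 2) (plus (cexp (p * z) * kummerM a c z) (cexp (- p * z) * kummerM a c z))).
  2:{ unfold ccosh. replace (- (p * z)) with (- p * z) by ring.
      change (/ 2 * (cexp (p * z) * kummerM a c z + cexp (- p * z) * kummerM a c z) =
              (cexp (p * z) + cexp (- p * z)) / 2 * kummerM a c z).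
      field. }
  revert S. apply is_series_ext. intros n.
  change (/ 2 * (conv (ecoef p) (mcoef a c) n * z ^ n + conv (ecoef (- p)) (mcoef a c) n * z ^ n) =
          (u n + v n) / 2 * z ^ n).
  rewrite Hu, Hv. field.
Qed.
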